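(* Let $\Bbbk$ be a field of characteristic $2$, $G=\langle\sigma\rangle$ cyclic of order $4$ acting on $V=V_3$ with $\sigma x_1=x_1+x_2$, $\sigma x_2=x_2+x_3$, $\sigma x_3=x_3$ on the dual basis, and $A=\Bbbk[N^G(x_1),\ x_2(x_2+x_3),\ x_3]$ with $N^G(x_1)=\prod_{i=0}^3\sigma^i(x_1)$. Then $K_3=\ker(\Delta^3:\Bbbk[V]\to\Bbbk[V])$ is a free $A$-module with basis $\{1,\ x_1,\ x_2,\ x_1^2,\ \Delta(x_1^3),\ \Delta(x_1^3x_2)\}$.
   Context: $\Delta=\sigma-\iota\in\Bbbk G$ acting on $\Bbbk[V]=\Bbbk[x_1,x_2,x_3]$. *)

(* Defs.v *)
From HB Require Import structures.
From mathcomp Require Import all_boot all_order all_algebra.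
From mathcomp Require Export mpoly.
Set Implicit Arguments. Unset Strict Implicit. Unset Printing Implicit Defensive.
Import GRing.Theory.
Local Open Scope ring_scope.

(* k[V] = k[x1,x2,x3] as {mpoly k[3]}; x_i = 'X_(i-1) *)
Definition o0 : 'I_3 := @Ordinal 3 0 isT.
Definition o1 : 'I_3 := @Ordinal 3 1 isT.
Definition o2 : 'I_3 := @Ordinal 3 2 isT.

Section Defs.
Variable k : fieldType.
Notation P := {mpoly k[3]}.

Definition x1 : P := 'X_o0.
Definition x2 : P := 'X_o1.
Definition x3 : P := 'X_o2.

Definition sigma (f : P) : P := comp_mpoly [tuple x1 + x2; x2 + x3; x3] f.

Definition Delta (f : P) : P := sigma f - f.

Definition normx1 : P := \prod_(i < 4) iter i sigma x1.

Definition inA (f : P) : Prop :=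
  exists Q : P, f = comp_mpoly [tuple normx1; x2 * (x2 + x3); x3] Q.

Definition inK3 (f : P) : Prop := iter 3 Delta f = 0.

Definition basisK3 : 6.-tuple P :=
  [tuple 1; x1; x2; x1 ^+ 2; Delta (x1 ^+ 3); Delta (x1 ^+ 3 * x2)].

End Defs.

(* Main.v *)
Require Import Defs.
From mathcomp Require Import all_boot all_order all_algebra.
From mathcomp Require Import mpoly ring zify.
Import Order.TTheory GRing.Theory.
Local Open Scope ring_scope.

Lemma mnm3 (m : 'X_{1..3}) : (m : seq nat) = [:: m o0; m o1; m o2].
Proof. by case: m => [[[|a [|b [|c [|d s]]]] Hs]]. Qed.
Lemma U01 : (U_(o1)%MM < U_(o0)%MM :> 'X_{1..3})%O.
Proof. by rewrite ltEmnm !mdeg1 2!mnm3 !mnm1E. Qed.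
Lemma U02 : (U_(o2)%MM < U_(o0)%MM :> 'X_{1..3})%O.
Proof. by rewrite ltEmnm !mdeg1 2!mnm3 !mnm1E. Qed.
Lemma U12 : (U_(o2)%MM < U_(o1)%MM :> 'X_{1..3})%O.
Proof. by rewrite ltEmnm !mdeg1 2!mnm3 !mnm1E. Qed.

Section S.
Context (k : fieldType) (hchar : 2%N \in [pchar k]).
Local Notation P := {mpoly k[3]}.
Local Notation x := (x1 k).
Local Notation y := (x2 k).
Local Notation z := (x3 k).
Local Notation bb := (x2 k * (x2 k + x3 k)).
Local Notation NN := (normx1 k).

Lemma h2 : 2%:R = 0 :> {mpoly k[3]}.
Proof. by rewrite -(rmorph_nat (@mpolyC 3 k)) (pcharf0 hchar). Qed.
Lemma sigmaM (p q : P) : sigma (p * q) = sigma p * sigma q.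
Proof. exact: rmorphM. Qed.
Lemma sigmaD (p q : P) : sigma (p + q) = sigma p + sigma q.
Proof. exact: rmorphD. Qed.
Lemma sigmaB (p q : P) : sigma (p - q) = sigma p - sigma q.
Proof. exact: rmorphB. Qed.
Lemma sigmaX (p : P) n : sigma (p ^+ n) = sigma p ^+ n.
Proof. exact: rmorphXn. Qed.
Lemma sigma1 : sigma (1 : P) = 1.
Proof. exact: rmorph1. Qed.
Lemma sigmaC c : sigma (c%:MP : P) = c%:MP.
Proof. exact: comp_mpolyC. Qed.
Lemma sigmax1 : sigma x = x + y.
Proof. by rewrite /sigma /x1 comp_mpolyXU. Qed.
Lemma sigmax2 : sigma y = y + z.
Proof. by rewrite /sigma /x2 comp_mpolyXU. Qed.
Lemma sigmax3 : sigma z = z.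
Proof. by rewrite /sigma /x3 comp_mpolyXU. Qed.

Ltac rr S := apply/eqP; rewrite -subr_eq0; apply/eqP; transitivity (2%:R * (S : {mpoly k[3]})); [ring | by rewrite h2 mul0r].
Lemma sigmaN (p : P) : sigma (- p) = - sigma p.
Proof. exact: rmorphN. Qed.
Definition sgE := (sigmaN, sigmaD, sigmaM, sigmaB, sigmaX, sigma1, sigmax1, sigmax2, sigmax3).

Lemma NN_prod : NN = x * (x + y) * (x + z) * (x + (y + z)).
Proof.
rewrite /normx1 !big_ord_recr big_ord0 /= mul1r.
rewrite !sgE; rr (((x*y*z^+2 + 4%:R*x*y^+2*z + 3%:R*x*y^+3 + 5%:R*x^+2*y*z + 5%:R*x^+2*y^+2 + x^+2*z^+2 + 2%:R*x^+3*y + x^+3*z) : P)).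
Qed.

Lemma NN_eq : NN = x^+4 + (bb + z^+2) * x^+2 + z * bb * x.
Proof. rewrite NN_prod; rr (((x^+2*y*z + x^+3*y + x^+3*z) : P)). Qed.

Lemma sigmaNN : sigma NN = NN.
Proof. rewrite NN_eq !sgE; rr (((4%:R*x*y*z^+2 + 3%:R*x*y^+2*z + 3%:R*x*y^+3 + x*z^+3 + x^+2*y*z + 3%:R*x^+2*y^+2 + x^+2*z^+2 + 2%:R*x^+3*y + y*z^+3 + 3%:R*y^+2*z^+2 + 2%:R*y^+3*z + y^+4) : P)). Qed.
Lemma sigmabb : sigma bb = bb.
Proof. rewrite !sgE; rr (((y*z + z^+2) : P)). Qed.

Definition tA : 3.-tuple P := [tuple NN; bb; z].

Lemma sigma_A (a : P) : inA a -> sigma a = a.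
Proof.
case=> Q ->; rewrite comp_mpolyEX /sigma raddf_sum /=; apply: eq_bigr => m _.
rewrite comp_mpolyZ; congr (_ *: _).
rewrite comp_mpolyX rmorph_prod /=; apply: eq_bigr => i _.
rewrite rmorphXn /=; congr (_ ^+ _).
case: i => [[|[|[|i]]] Hi] //=; rewrite (tnth_nth 0) /=.
- exact: sigmaNN.
- exact: sigmabb.
- exact: sigmax3.
Qed.


Lemma inA_C c : inA (c%:MP : P).
Proof. by exists c%:MP; rewrite comp_mpolyC. Qed.
Lemma inA_0 : inA (0 : P).
Proof. by exists 0; rewrite comp_mpoly0. Qed.
Lemma inA_1 : inA (1 : P).
Proof. by exists 1; rewrite comp_mpoly1. Qed.
Lemma inA_D (a b : P) : inA a -> inA b -> inA (a + b).
Proof. by case=> [Q ->] [R ->]; exists (Q + R); rewrite comp_mpolyD. Qed.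
Lemma inA_N (a : P) : inA a -> inA (- a).
Proof. by case=> [Q ->]; exists (- Q); rewrite comp_mpolyN. Qed.
Lemma inA_M (a b : P) : inA a -> inA b -> inA (a * b).
Proof. by case=> [Q ->] [R ->]; exists (Q * R); rewrite rmorphM. Qed.
Lemma inA_X (a : P) n : inA a -> inA (a ^+ n).
Proof. by case=> [Q ->]; exists (Q ^+ n); rewrite rmorphXn. Qed.
Arguments inA_D {a b}. Arguments inA_N {a}. Arguments inA_M {a b}.
Lemma inA_NN : inA NN.
Proof. by exists 'X_o0; rewrite comp_mpolyXU. Qed.
Lemma inA_bb : inA bb.
Proof. by exists 'X_o1; rewrite comp_mpolyXU. Qed.
Lemma inA_z : inA z.
Proof. by exists 'X_o2; rewrite comp_mpolyXU. Qed.

Lemma DeltaD (p q : P) : Delta (p + q) = Delta p + Delta q.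
Proof. rewrite /Delta sigmaD; ring. Qed.
Lemma Delta0 : Delta (0 : P) = 0.
Proof. by rewrite /Delta /sigma comp_mpoly0 subrr. Qed.
Lemma DeltaA (a p : P) : inA a -> Delta (a * p) = a * Delta p.
Proof. move=> Ha; rewrite /Delta sigmaM sigma_A //; ring. Qed.

Definition D3 (p : P) := Delta (Delta (Delta p)).
Lemma D3E (p : P) : iter 3 (@Delta k) p = D3 p.
Proof. by []. Qed.
Lemma D3D (p q : P) : D3 (p + q) = D3 p + D3 q.
Proof. by rewrite /D3 !DeltaD. Qed.
Lemma D3A (a p : P) : inA a -> D3 (a * p) = a * D3 p.
Proof. by move=> Ha; rewrite /D3 !DeltaA. Qed.
Lemma D3_sum (I : Type) (r : seq I) (F : I -> P) :
  D3 (\sum_(i <- r) F i) = \sum_(i <- r) D3 (F i).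
Proof.
elim: r => [|i r IH]; first by rewrite !big_nil /D3 !Delta0.
by rewrite !big_cons D3D IH.
Qed.


Definition E8 (c0 c1 c2 c3 c4 c5 c6 c7 : P) : P :=
  c0 + c1 * x + c2 * x^+2 + c3 * x^+3 + (c4 + c5 * x + c6 * x^+2 + c7 * x^+3) * y.
Definition span8 (f : P) := exists c0 c1 c2 c3 c4 c5 c6 c7,
  (inA c0 /\ inA c1 /\ inA c2 /\ inA c3 /\ inA c4 /\ inA c5 /\ inA c6 /\ inA c7)
  /\ f = E8 c0 c1 c2 c3 c4 c5 c6 c7.

Lemma span8_1 : span8 1.
Proof.
exists 1, 0, 0, 0, 0, 0, 0, 0.
split; first by do !split; auto using inA_0, inA_1.
rewrite /E8; ring.
Qed.

Lemma span8_D f g : span8 f -> span8 g -> span8 (f + g).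
Proof.
move=> [c0 [c1 [c2 [c3 [c4 [c5 [c6 [c7 [[H0 [H1 [H2 [H3 [H4 [H5 [H6 H7]]]]]]] ->]]]]]]]]].
move=> [d0 [d1 [d2 [d3 [d4 [d5 [d6 [d7 [[G0 [G1 [G2 [G3 [G4 [G5 [G6 G7]]]]]]] ->]]]]]]]]].
exists (c0 + d0), (c1 + d1), (c2 + d2), (c3 + d3), (c4 + d4), (c5 + d5), (c6 + d6), (c7 + d7).
split; first by do !split; apply: inA_D.
rewrite /E8; ring.
Qed.

Lemma span8_A a f : inA a -> span8 f -> span8 (a * f).
Proof.
move=> Ha [c0 [c1 [c2 [c3 [c4 [c5 [c6 [c7 [[H0 [H1 [H2 [H3 [H4 [H5 [H6 H7]]]]]]] ->]]]]]]]]].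
exists (a * c0), (a * c1), (a * c2), (a * c3), (a * c4), (a * c5), (a * c6), (a * c7).
split; first by do !split; apply: inA_M.
rewrite /E8; ring.
Qed.

Lemma span8_x f : span8 f -> span8 (x * f).
Proof.
move=> [c0 [c1 [c2 [c3 [c4 [c5 [c6 [c7 [[H0 [H1 [H2 [H3 [H4 [H5 [H6 H7]]]]]]] ->]]]]]]]]].
exists (c3 * NN), (c0 - c3 * (z * bb)), (c1 - c3 * (bb + z^+2)), c2,
  (c7 * NN), (c4 - c7 * (z * bb)), (c5 - c7 * (bb + z^+2)), c6.
have HA := inA_NN; have HB := inA_bb; have HZ := inA_z.
split.
  by do !split; repeat first [assumption | apply: inA_D | apply: inA_N | apply: inA_M | apply: inA_X].
rewrite /E8 NN_eq; ring.
Qed.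

Lemma span8_y f : span8 f -> span8 (y * f).
Proof.
move=> [c0 [c1 [c2 [c3 [c4 [c5 [c6 [c7 [[H0 [H1 [H2 [H3 [H4 [H5 [H6 H7]]]]]]] ->]]]]]]]]].
exists (c4 * bb), (c5 * bb), (c6 * bb), (c7 * bb),
  (c0 - c4 * z), (c1 - c5 * z), (c2 - c6 * z), (c3 - c7 * z).
have HB := inA_bb; have HZ := inA_z.
split.
  by do !split; repeat first [assumption | apply: inA_D | apply: inA_N | apply: inA_M].
rewrite /E8; ring.
Qed.

Lemma span8_mono i j l : span8 (x ^+ i * y ^+ j * z ^+ l).
Proof.
rewrite mulrC; apply: span8_A; first exact/inA_X/inA_z.
elim: i => [|i IH].
  rewrite expr0 mul1r; elim: j => [|j IH]; first by rewrite expr0; exact: span8_1.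
  by rewrite exprS; apply: span8_y.
by rewrite exprS -mulrA; apply: span8_x.
Qed.

Lemma span8_all f : span8 f.
Proof.
rewrite (mpolyE f); elim: (msupp f) => [|m r IH].
  rewrite big_nil; have := span8_A 0 1 inA_0 span8_1; by rewrite mul0r.
rewrite big_cons; apply: span8_D => //.
rewrite -mul_mpolyC; apply: span8_A; first exact: inA_C.
rewrite mpolyXE_id !big_ord_recr big_ord0 /= mul1r.
exact: span8_mono.
Qed.

Lemma lead_sum_gen (T : eqType) (r : seq T) (F : T -> P) :
  pairwise (fun u v => (F u != 0) ==> (F v != 0) ==> (mlead (F u) != mlead (F v))) r ->
  (forall u, u \in r -> F u = 0) \/
  (\sum_(u <- r) F u != 0 /\ exists2 u, u \in r & (F u != 0 /\ mlead (\sum_(u <- r) F u) = mlead (F u))).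
Proof.
elim: r => [|a r IH]; first by left.
rewrite pairwise_cons => /andP[Ha /IH {IH}].
rewrite big_cons.
have [Fa0|Fan0] := eqVneq (F a) 0.
  rewrite Fa0 add0r => -[Hall|[Hs [u Hu [Fu Hl]]]].
    by left => u; rewrite in_cons => /orP[/eqP->|/Hall].
  by right; split => //; exists u => //; rewrite in_cons Hu orbT.
move=> [Hall|[Hs [u Hu [Fu Hl]]]].
  right; rewrite big1_seq ?addr0; last by move=> v /andP[_ /Hall].
  by split => //; exists a => //; rewrite mem_head.
have Hne : mlead (F a) != mlead (\sum_(v <- r) F v).
  by rewrite Hl; move/allP: Ha => /(_ u Hu); rewrite Fan0 Fu.
have Hsum : F a + \sum_(v <- r) F v != 0.
  apply: contraNneq Hne => /eqP; rewrite addr_eq0 => /eqP ->.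
  by rewrite mleadN.
right; split => //.
rewrite mleadD // joinEtotal.
case: leP => _.
  by exists u; [rewrite in_cons Hu orbT | split].
by exists a; [rewrite mem_head | split].
Qed.

Lemma neq0_lead (p : P) : mlead p != 0%MM -> p != 0.
Proof. by apply: contraNneq => ->; rewrite mlead0. Qed.

Lemma mlead_x : mlead x = U_(o0)%MM. Proof. exact: mleadXm. Qed.
Lemma mlead_y : mlead y = U_(o1)%MM. Proof. exact: mleadXm. Qed.
Lemma mlead_z : mlead z = U_(o2)%MM. Proof. exact: mleadXm. Qed.



Lemma mlead_yz : mlead (y + z) = U_(o1)%MM.
Proof. by rewrite mleadDl mlead_y // mlead_z U12. Qed.
Lemma mlead_xw (w : P) : (mlead w < U_(o0)%MM)%O -> mlead (x + w) = U_(o0)%MM.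
Proof. by move=> H; rewrite mleadDl mlead_x. Qed.
Lemma lead_nz {p : P} {i} : mlead p = U_(i)%MM -> p != 0.
Proof. by move=> H; apply: neq0_lead; rewrite H mnm1_eq0. Qed.

Lemma mlead_NN : NN != 0 /\ mlead NN = (U_(o0)%MM *+ 4)%MM.
Proof.
have Hx := mlead_x.
have Hxy : mlead (x + y) = U_(o0)%MM by apply: mlead_xw; rewrite mlead_y U01.
have Hxz : mlead (x + z) = U_(o0)%MM by apply: mlead_xw; rewrite mlead_z U02.
have Hxyz : mlead (x + (y + z)) = U_(o0)%MM by apply: mlead_xw; rewrite mlead_yz U01.
have nx := lead_nz Hx; have nxy := lead_nz Hxy; have nxz := lead_nz Hxz; have nxyz := lead_nz Hxyz.
rewrite NN_prod; split; first by rewrite !mulf_neq0.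
rewrite !mleadM ?mulf_neq0 // Hx Hxy Hxz Hxyz.
by rewrite !mulmS mulm0n addm0 !addmA.
Qed.

Lemma mlead_bb : bb != 0 /\ mlead bb = (U_(o1)%MM + U_(o1)%MM)%MM.
Proof.
have ny := lead_nz mlead_y; have nyz := lead_nz mlead_yz.
split; first by rewrite mulf_neq0.
by rewrite mleadM // mlead_y mlead_yz.
Qed.


Lemma term_lead (m : 'X_{1..3}) :
  ('X_[m] \mPo tA) != 0 /\
  [/\ mlead ('X_[m] \mPo tA) o0 = 4 * m o0, mlead ('X_[m] \mPo tA) o1 = 2 * m o1
    & mlead ('X_[m] \mPo tA) o2 = m o2]%N.
Proof.
rewrite comp_mpolyX !big_ord_recr big_ord0 /= mul1r.
have E0 : widen_ord (leqnSn 2) (widen_ord (leqnSn 1) ord_max) = o0 :> 'I_3 by apply/val_inj.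
have E1 : widen_ord (leqnSn 2) ord_max = o1 :> 'I_3 by apply/val_inj.
have E2 : ord_max = o2 :> 'I_3 by apply/val_inj.
rewrite E0 E1 E2.
have [nN lN] := mlead_NN; have [nb lb] := mlead_bb.
have nz := lead_nz mlead_z.
have nNm : NN ^+ m o0 != 0 by rewrite expf_neq0.
have nbm : bb ^+ m o1 != 0 by rewrite expf_neq0.
have nzm : z ^+ m o2 != 0 by rewrite expf_neq0.
rewrite !(tnth_nth 0) /=.
split; first by rewrite !mulf_neq0.
rewrite !mleadM ?mulf_neq0 // !mleadX // lN lb mlead_z.
rewrite !mnmDE; do 15 try rewrite mulmnE; rewrite !mnmDE !mnm1E.
have e01 : (o0 == o1) = false by []. have e02 : (o0 == o2) = false by [].
have e10 : (o1 == o0) = false by []. have e12 : (o1 == o2) = false by [].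
have e20 : (o2 == o0) = false by []. have e21 : (o2 == o1) = false by [].
rewrite !eqxx e01 e02 e10 e12 e20 e21 /=.
by rewrite !mul1n !mul0n !addn0 !add0n.
Qed.


Lemma ord3P (Pr : 'I_3 -> Prop) : Pr o0 -> Pr o1 -> Pr o2 -> forall i, Pr i.
Proof.
move=> H0 H1 H2 [[|[|[|i]]] Hi] //.
- by have -> : Ordinal Hi = o0 by apply/val_inj.
- by have -> : Ordinal Hi = o1 by apply/val_inj.
- by have -> : Ordinal Hi = o2 by apply/val_inj.
Qed.

Lemma term_inj (m m' : 'X_{1..3}) :
  mlead ('X_[m] \mPo tA) = mlead ('X_[m'] \mPo tA) -> m = m'.
Proof.
have [_ [a0 a1 a2]] := term_lead m; have [_ [b0 b1 b2]] := term_lead m'.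
move=> E; apply/mnmP; apply: ord3P.
- by move: a0; rewrite E b0 => /eqP; rewrite eqn_mul2l /= => /eqP.
- by move: a1; rewrite E b1 => /eqP; rewrite eqn_mul2l /= => /eqP.
- by move: a2; rewrite E b2.
Qed.

Lemma comp_lead (Q : P) :
  (Q \mPo tA = 0 -> Q = 0) /\
  (Q \mPo tA != 0 -> exists m, mlead (Q \mPo tA) = mlead ('X_[m] \mPo tA)).
Proof.
rewrite comp_mpolyEX.
set F := fun m => Q@_m *: ('X_[m] \mPo tA).
have FnZ : forall m, m \in msupp Q -> F m != 0.
  move=> m; rewrite mcoeff_msupp => Hm; rewrite /F scaler_eq0 negb_or Hm.
  by have [-> _] := term_lead m.
have HP : pairwise (fun u v => (F u != 0) ==> (F v != 0) ==> (mlead (F u) != mlead (F v))) (msupp Q).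
  have := msupp_uniq Q; rewrite uniq_pairwise; apply: sub_pairwise => u v /= Huv.
  apply/implyP => Fu; apply/implyP => Fv.
  have cu : Q@_u != 0 by apply: contraNneq Fu => E; rewrite /F E scale0r.
  have cv : Q@_v != 0 by apply: contraNneq Fv => E; rewrite /F E scale0r.
  rewrite /F !mleadZ //; apply: contraNneq Huv => /term_inj ->; by [].
have [Hall|[Hs [u Hu [Fu Hl]]]] := lead_sum_gen _ _ _ HP.
  split=> [_|]; last by rewrite big1_seq ?eqxx // => m /andP[_ /Hall].
  apply: msuppnil0; case E: (msupp Q) => [//|m r].
  have Hm : m \in msupp Q by rewrite E mem_head.
  by move: (FnZ m Hm); rewrite (Hall m Hm) eqxx.
split=> [E|_]; first by rewrite E eqxx in Hs.
exists u; rewrite Hl /F mleadZ //.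
by apply: contraNneq Fu => E; rewrite /F E scale0r.
Qed.

Lemma A_lead (a : P) : inA a -> a != 0 ->
  (mlead a o0 %% 4 = 0 /\ mlead a o1 %% 2 = 0)%N.
Proof.
case=> Q ->; rewrite -/tA => Ha.
have [_ /(_ Ha) [m ->]] := comp_lead Q.
have [_ [-> -> _]] := term_lead m.
by rewrite !(mulnC 4) !(mulnC 2) !modnMl.
Qed.


Lemma x_nz : x != 0. Proof. exact: lead_nz mlead_x. Qed.
Lemma y_nz : y != 0. Proof. exact: lead_nz mlead_y. Qed.
Lemma z_nz : z != 0. Proof. exact: lead_nz mlead_z. Qed.

Lemma lead_cxy (c : P) i j : inA c -> c != 0 -> (i < 4)%N -> (j < 2)%N ->
  c * x^+i * y^+j != 0 /\ (mlead (c * x^+i * y^+j) o0 %% 4 = i /\ mlead (c * x^+i * y^+j) o1 %% 2 = j)%N.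
Proof.
move=> Hc nc Hi Hj.
have [l0 l1] := A_lead _ Hc nc.
have nxi : x ^+ i != 0 by rewrite expf_neq0 // x_nz.
have nyj : y ^+ j != 0 by rewrite expf_neq0 // y_nz.
split; first by rewrite !mulf_neq0.
rewrite !mleadM ?mulf_neq0 // !mleadX ?x_nz ?y_nz // mlead_x mlead_y.
rewrite !mnmDE; do 4 try rewrite mulmnE; rewrite !mnm1E.
have e01 : (o0 == o1) = false by []. have e10 : (o1 == o0) = false by [].
rewrite !eqxx e01 e10 /= !mul1n !mul0n !addn0.
by rewrite -modnDml l0 add0n -modnDml l1 add0n !modn_small.
Qed.

Lemma E8_inj c0 c1 c2 c3 c4 c5 c6 c7 :
  (inA c0 /\ inA c1 /\ inA c2 /\ inA c3 /\ inA c4 /\ inA c5 /\ inA c6 /\ inA c7) ->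
  E8 c0 c1 c2 c3 c4 c5 c6 c7 = 0 ->
  [/\ c0 = 0, c1 = 0, c2 = 0, c3 = 0 & [/\ c4 = 0, c5 = 0, c6 = 0 & c7 = 0]].
Proof.
move=> [H0 [H1 [H2 [H3 [H4 [H5 [H6 H7]]]]]]] HE.
pose cs := [:: c0; c1; c2; c3; c4; c5; c6; c7].
have Hc : forall n, inA (nth 0 cs n).
  by move=> [|[|[|[|[|[|[|[|n]]]]]]]] //=; rewrite nth_nil; exact: inA_0.
pose r : seq (nat * nat) := [:: (0,0); (1,0); (2,0); (3,0); (0,1); (1,1); (2,1); (3,1)]%N.
pose F (u : nat * nat) := nth 0 cs (u.1 + 4 * u.2) * x^+u.1 * y^+u.2.
have Hr : all (fun u : nat * nat => (u.1 < 4) && (u.2 < 2))%N r by [].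
have HP : pairwise (fun u v => (F u != 0) ==> (F v != 0) ==> (mlead (F u) != mlead (F v))) r.
  have : uniq r by [].
  rewrite uniq_pairwise; apply: sub_in_pairwise Hr => u v /andP[u1 u2] /andP[v1 v2] /= Huv.
  apply/implyP => Fu; apply/implyP => Fv.
  have cu : nth 0 cs (u.1 + 4 * u.2) != 0 by apply: contraNneq Fu => E; rewrite /F E !mul0r.
  have cv : nth 0 cs (v.1 + 4 * v.2) != 0 by apply: contraNneq Fv => E; rewrite /F E !mul0r.
  have [_ [a0 a1]] := lead_cxy _ _ _ (Hc _) cu u1 u2.
  have [_ [b0 b1]] := lead_cxy _ _ _ (Hc _) cv v1 v2.
  apply: contraNneq Huv => E; rewrite /F E in a0 a1.
  by move: u v {u1 u2 v1 v2 Fu Fv cu cv E} a0 a1 b0 b1 => [u1 u2] [v1 v2] /= -> -> -> ->.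
have Hsum : \sum_(u <- r) F u = E8 c0 c1 c2 c3 c4 c5 c6 c7.
  rewrite /E8 !big_cons big_nil /F /=; ring.
have [Hall|[Hs _]] := lead_sum_gen _ _ _ HP; last by rewrite Hsum HE eqxx in Hs.
have G : forall u, u \in r -> nth 0 cs (u.1 + 4 * u.2) = 0.
  move=> u Hu; have := Hall u Hu; rewrite /F => /eqP.
  rewrite !mulf_eq0 !expf_eq0 (negbTE x_nz) (negbTE y_nz) !andbF !orbF => /eqP //.
split; [exact: (G (0,0)%N) | exact: (G (1,0)%N) | exact: (G (2,0)%N) | exact: (G (3,0)%N) | ].
split; [exact: (G (0,1)%N) | exact: (G (1,1)%N) | exact: (G (2,1)%N) | exact: (G (3,1)%N)].
Qed.


Lemma div_z (a c : P) : inA a -> inA c -> bb * c = z * a ->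
  exists d, inA d /\ c = z * d.
Proof.
case=> Qa ->; case=> Qc ->; rewrite -/tA => E.
have EQ : 'X_o1 * Qc = 'X_o2 * Qa.
  apply/eqP; rewrite -subr_eq0; apply/eqP.
  have [H _] := comp_lead ('X_o1 * Qc - 'X_o2 * Qa); apply: H.
  rewrite rmorphB !rmorphM /= !comp_mpolyXU /= E; exact: subrr.
have Hsupp : forall m, m \in msupp Qc -> (0 < m o2)%N.
  move=> m Hm.
  have H1 : (U_(o1) + m)%MM \in msupp (Qc * 'X_[U_(o1)]).
    by rewrite (perm_mem (msuppMX _ _)) mem_map // => m1 m2; apply: addmI.
  move: H1; rewrite mulrC EQ mulrC (perm_mem (msuppMX _ _)) => /mapP[m' _ Em].
  have := congr1 (fun w : 'X_{1..3} => w o2) Em; rewrite /= !mnmDE !mnm1E.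
  have e12 : (o1 == o2) = false by [].
  by rewrite e12 eqxx add0n => ->.
pose D := \sum_(m <- msupp Qc) Qc@_m *: 'X_[(m - U_(o2))%MM].
have QD : Qc = 'X_o2 * D.
  rewrite /D mulr_sumr [LHS]mpolyE; apply: eq_big_seq => m Hm.
  rewrite -scalerAr -mpolyXD addmC submK //.
  apply/mnm_lepP; apply: ord3P; rewrite mnm1E //.
  exact: Hsupp.
exists (D \mPo tA); split; first by exists D.
by rewrite QD rmorphM /= comp_mpolyXU.
Qed.


Ltac d3s := rewrite /D3 /Delta !sgE.
Lemma D3_1 : D3 1 = 0. Proof. d3s; rr (((0) : P)). Qed.
Lemma D3_x : D3 x = 0. Proof. d3s; rr (((0) : P)). Qed.
Lemma D3_x2 : D3 (x^+2) = 0. Proof. d3s; rr (((3%:R*y*z + 3%:R*z^+2) : P)). Qed.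
Lemma D3_x3 : D3 (x^+3) = z * bb. Proof. d3s; rr (((9%:R*x*y*z + 9%:R*x*z^+2 + 31%:R*y*z^+2 + 22%:R*y^+2*z + 3%:R*y^+3 + 12%:R*z^+3) : P)). Qed.
Lemma D3_y : D3 y = 0. Proof. d3s; rr (((0) : P)). Qed.
Lemma D3_xy : D3 (x * y) = z^+2. Proof. d3s; rr (((z^+2) : P)). Qed.
Lemma D3_x2y : D3 (x^+2 * y) = z^+3. Proof. d3s; rr (((3%:R*x*z^+2 + 18%:R*y*z^+2 + 6%:R*y^+2*z + 10%:R*z^+3) : P)). Qed.
Lemma D3_x3y : D3 (x^+3 * y) = z^+2 * bb + z^+4 + z^+3 * x + z^+2 * x^+2 + z * bb * y.
Proof. d3s; rr (((54%:R*x*y*z^+2 + 18%:R*x*y^+2*z + 31%:R*x*z^+3 + 4%:R*x^+2*z^+2 + 115%:R*y*z^+3 + 116%:R*y^+2*z^+2 + 40%:R*y^+3*z + 3%:R*y^+4 + 37%:R*z^+4) : P)). Qed.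

Lemma B4E : Delta (x^+3) = E8 (z * bb) bb 0 0 (bb + z^+2) z 1 0.
Proof. rewrite /E8 /Delta !sgE; rr (((- x*y*z + x*y^+2 + x^+2*y - y*z^+2 - y^+2*z) : P)). Qed.
Lemma B5E : Delta (x^+3 * y) = E8 (bb^+2) 0 bb z (z * bb) bb 0 0.
Proof. rewrite /E8 /Delta !sgE; rr (((x*y^+2*z + x*y^+3 + x^+2*y*z + x^+2*y^+2 - y^+2*z^+2 - y^+3*z) : P)). Qed.
Lemma D3_B4 : D3 (Delta (x^+3)) = 0.
Proof. rewrite /D3 /Delta !sgE; rr (((9%:R*x*z^+2 + 72%:R*y*z^+2 + 18%:R*y^+2*z + 57%:R*z^+3) : P)). Qed.
Lemma D3_B5 : D3 (Delta (x^+3 * y)) = 0.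
Proof. rewrite /D3 /Delta !sgE; rr (((45%:R*x*y*z^+2 + 72%:R*x*z^+3 + 471%:R*y*z^+3 + 234%:R*y^+2*z^+2 + 30%:R*y^+3*z + 276%:R*z^+4) : P)). Qed.

Lemma E8_expand c0 c1 c2 c3 c4 c5 c6 c7 : E8 c0 c1 c2 c3 c4 c5 c6 c7 =
  c0 * 1 + c1 * x + c2 * x^+2 + c3 * x^+3 + c4 * y + c5 * (x * y) + c6 * (x^+2 * y) + c7 * (x^+3 * y).
Proof. rewrite /E8; ring. Qed.

Lemma D3_E8 c0 c1 c2 c3 c4 c5 c6 c7 :
  (inA c0 /\ inA c1 /\ inA c2 /\ inA c3 /\ inA c4 /\ inA c5 /\ inA c6 /\ inA c7) ->
  D3 (E8 c0 c1 c2 c3 c4 c5 c6 c7) =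
  E8 (c5 * z^+2 + c6 * z^+3 + c3 * (z * bb) + c7 * (z^+2 * bb + z^+4)) (c7 * z^+3) (c7 * z^+2) 0
     (c7 * (z * bb)) 0 0 0.
Proof.
move=> [H0 [H1 [H2 [H3 [H4 [H5 [H6 H7]]]]]]].
rewrite E8_expand !D3D (D3A _ _ H0) (D3A _ _ H1) (D3A _ _ H2) (D3A _ _ H3) (D3A _ _ H4) (D3A _ _ H5) (D3A _ _ H6) (D3A _ _ H7) D3_1 D3_x D3_x2 D3_x3 D3_y D3_xy D3_x2y D3_x3y /E8; ring.
Qed.


Lemma sum6E (a : 'I_6 -> P) : \sum_(i < 6) a i * tnth (basisK3 k) i =
  a (inord 0) + a (inord 1) * x + a (inord 2) * y + a (inord 3) * x^+2
  + a (inord 4) * Delta (x^+3) + a (inord 5) * Delta (x^+3 * y).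
Proof.
have -> : \sum_(i < 6) a i * tnth (basisK3 k) i =
   \sum_(i < 6) (fun j => a (inord j) * tnth (basisK3 k) (inord j)) i.
  by apply: eq_bigr => i _; rewrite inord_val.
rewrite -(big_mkord xpredT (fun j => a (inord j) * tnth (basisK3 k) (inord j))) /index_iota /= !big_cons big_nil.
rewrite !(tnth_nth 0) !inordK //=; ring.
Qed.

Lemma opp2 (p : P) : - p = p.
Proof.
apply/eqP; rewrite eq_sym -subr_eq0 opprK -mulr2n -mulr_natl.
have -> : (2%:R : P) = 0 by exact: h2.
by rewrite mul0r.
Qed.

Lemma ord6P (Pr : 'I_6 -> Prop) :
  Pr (inord 0) -> Pr (inord 1) -> Pr (inord 2) -> Pr (inord 3) -> Pr (inord 4) -> Pr (inord 5) ->
  forall i, Pr i.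
Proof.
move=> H0 H1 H2 H3 H4 H5 i; rewrite -(inord_val i).
by case: i => [[|[|[|[|[|[|n]]]]]] Hn].
Qed.

Lemma part1 (i : 'I_6) : D3 (tnth (basisK3 k) i) = 0.
Proof.
apply: (ord6P (fun i => D3 (tnth (basisK3 k) i) = 0)) => //;
  rewrite (tnth_nth 0) inordK //=.
- exact: D3_1.
- exact: D3_x.
- exact: D3_y.
- exact: D3_x2.
- exact: D3_B4.
- exact: D3_B5.
Qed.

Lemma main :
  (forall i : 'I_6, inK3 (tnth (basisK3 k) i)) /\
  (forall f : {mpoly k[3]},
      inK3 f <->
      exists a : 'I_6 -> {mpoly k[3]},
        (forall i, inA (a i)) /\ f = \sum_(i < 6) a i * tnth (basisK3 k) i) /\
  (forall a : 'I_6 -> {mpoly k[3]},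
      (forall i, inA (a i)) ->
      \sum_(i < 6) a i * tnth (basisK3 k) i = 0 ->
      forall i, a i = 0).
Proof.
have HB := inA_bb; have HZ := inA_z.
split; first by move=> i; rewrite /inK3 D3E part1.
split.
  move=> f; split; last first.
    move=> [a [Ha ->]]; rewrite /inK3 D3E D3_sum big1 // => i _.
    by rewrite D3A // part1 mulr0.
  rewrite /inK3 D3E.
  have [c0 [c1 [c2 [c3 [c4 [c5 [c6 [c7 [HA Ef]]]]]]]]] := span8_all f.
  move: (HA) => [H0 [H1 [H2 [H3 [H4 [H5 [H6 H7]]]]]]].
  rewrite Ef D3_E8 // => HD.
  have HA' : inA (c5 * z^+2 + c6 * z^+3 + c3 * (z * bb) + c7 * (z^+2 * bb + z^+4)) /\
    inA (c7 * z^+3) /\ inA (c7 * z^+2) /\ inA (0:P) /\ inA (c7 * (z * bb)) /\ inA (0:P) /\ inA (0:P) /\ inA (0:P).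
    by do !split; repeat first [assumption | exact: inA_0 | apply: inA_D | apply: inA_M | apply: inA_X].
  have [e0 e1 _ _ _] := E8_inj _ _ _ _ _ _ _ _ HA' HD.
  have c70 : c7 = 0.
    by move/eqP: e1; rewrite mulf_eq0 expf_eq0 (negbTE z_nz) andbF orbF => /eqP.
  rewrite c70 !mul0r addr0 in e0.
  have e0z : c5 * z + c6 * z^+2 + c3 * bb = 0.
    have : z * (c5 * z + c6 * z^+2 + c3 * bb) = 0 by rewrite -e0; ring.
    by move/eqP; rewrite mulf_eq0 (negbTE z_nz) /= => /eqP.
  have e0' : bb * c3 = z * (- (c5 + c6 * z)).
    by apply/eqP; rewrite -subr_eq0; apply/eqP; rewrite -e0z; ring.
  have [d [Hd Ed]] := div_z _ _ (inA_N (inA_D H5 (inA_M H6 HZ))) H3 e0'.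
  have e5 : c5 = c6 * z + d * bb.
    have : z * (c5 + c6 * z + d * bb) = 0 by rewrite -e0z Ed; ring.
    move/eqP; rewrite mulf_eq0 (negbTE z_nz) /= => E.
    by apply/eqP; rewrite -subr_eq0 -[c6 * z + d * bb]opp2 opprK addrA.
  pose cs := [:: c0 - c6 * (z * bb) - d * bb^+2; c1 - c6 * bb;
                 c4 - c6 * (bb + z^+2) - d * (z * bb); c2 - d * bb; c6; d].
  exists (fun i : 'I_6 => nth 0 cs i); split.
    apply: ord6P; rewrite inordK //= ;
      by repeat first [assumption | apply: inA_D | apply: inA_N | apply: inA_M | apply: inA_X].
  rewrite sum6E !inordK //= B4E B5E Ed e5 c70 /E8; ring.
move=> a Ha; rewrite sum6E B4E B5E => H.
have HA : forall j, inA (a (inord j)) by move=> j; exact: Ha.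
have H' : E8 (a (inord 0) + a (inord 4) * (z * bb) + a (inord 5) * bb^+2)
   (a (inord 1) + a (inord 4) * bb) (a (inord 3) + a (inord 5) * bb) (a (inord 5) * z)
   (a (inord 2) + a (inord 4) * (bb + z^+2) + a (inord 5) * (z * bb))
   (a (inord 4) * z + a (inord 5) * bb) (a (inord 4)) 0 = 0.
  by apply: etrans _ H; rewrite /E8; ring.
have HA' : inA (a (inord 0) + a (inord 4) * (z * bb) + a (inord 5) * bb^+2) /\
   inA (a (inord 1) + a (inord 4) * bb) /\ inA (a (inord 3) + a (inord 5) * bb) /\ inA (a (inord 5) * z) /\
   inA (a (inord 2) + a (inord 4) * (bb + z^+2) + a (inord 5) * (z * bb)) /\
   inA (a (inord 4) * z + a (inord 5) * bb) /\ inA (a (inord 4)) /\ inA (0:P).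
  have := HA 0; have := HA 1; have := HA 2; have := HA 3; have := HA 4; have := HA 5 => *.
  by do !split; repeat first [assumption | exact: inA_0 | apply: inA_D | apply: inA_M | apply: inA_X].
have [e0 e1 e2 e3 [e4 e5 e6 _]] := E8_inj _ _ _ _ _ _ _ _ HA' H'.
have a5 : a (inord 5) = 0.
  by move/eqP: e3; rewrite mulf_eq0 (negbTE z_nz) orbF => /eqP.
rewrite e6 a5 !mul0r !addr0 in e0 e1 e2 e4.
by apply: ord6P.
Qed.

End S.

Theorem proposition4p18 (k : fieldType) (hchar : 2%N \in [pchar k]) :
  (forall i : 'I_6, inK3 (tnth (basisK3 k) i)) /\
  (forall f : {mpoly k[3]},
      inK3 f <->
      exists a : 'I_6 -> {mpoly k[3]},
        (forall i, inA (a i)) /\ f = \sum_(i < 6) a i * tnth (basisK3 k) i) /\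
  (forall a : 'I_6 -> {mpoly k[3]},
      (forall i, inA (a i)) ->
      \sum_(i < 6) a i * tnth (basisK3 k) i = 0 ->
      forall i, a i = 0).
Proof. exact: main hchar. Qed.
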